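(* A function $SO:[0,1]^2\to[0,1]$ is a semi-overlap function if and only if there exist two functions $f,g:[0,1]^2\to[0,1]$ such that $$SO(u,v)=\frac{f(u,v)}{f(u,v)+g(u,v)}\quad\text{for all }u,v\in[0,1],$$ and the following conditions hold: (1) $f(u,v)+g(u,v)\neq 0$ for all $u,v\in[0,1]$; (2) $f$ and $g$ are commutative, i.e. $f(u,v)=f(v,u)$ and $g(u,v)=g(v,u)$; (3) if $uv=0$, then $f(u,v)=0$; (4) if $uv=1$, then $g(u,v)=0$; (5) $f$ is increasing and $g$ is decreasing (in each variable); (6) $f$ is left-continuous and $f+g$ is right-continuous.
   Context: A binary function $h$ on $[0,1]^2$ is called left-continuous if for every $u\in[0,1]$ and every nonempty family $\{v_i\mid i\in I\}\subseteq[0,1]$ one has $h(u,\sup_{i\in I} v_i)=\sup_{i\in I} h(u,v_i)$; right-continuity is the analogous notion with limits from the right (infima). A semi-overlap function is a function $SO:[0,1]^2\to[0,1]$ such that for all $u,v\in[0,1]$: (S1) $SO(u,v)=SO(v,u)$; (S2) if $uv=0$ then $SO(u,v)=0$; (S3) if $uv=1$ then $SO(u,v)=1$; (S4) $SO$ is increasing in each variable; (S5) $SO$ is left-continuous. *)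

(* Defs.v *)
From HB Require Import structures.
From mathcomp Require Import all_boot all_order all_algebra.
From mathcomp Require Import all_classical all_reals.
Set Implicit Arguments. Unset Strict Implicit. Unset Printing Implicit Defensive.
Import Order.TTheory GRing.Theory Num.Theory.
Local Open Scope classical_set_scope.
Local Open Scope ring_scope.

(* Binary functions on [0,1]^2 are represented as total functions R -> R -> R;
   only their values on [0,1]^2 matter. *)

Definition I01 {R : realType} (x : R) : Prop := 0 <= x <= 1.

Definition into_unit {R : realType} (h : R -> R -> R) : Prop :=
  forall u v, I01 u -> I01 v -> I01 (h u v).

Definition commutative2 {R : realType} (h : R -> R -> R) : Prop :=
  forall u v, I01 u -> I01 v -> h u v = h v u.

Definition increasing2 {R : realType} (h : R -> R -> R) : Prop :=
  (forall u1 u2 v, I01 u1 -> I01 u2 -> I01 v -> u1 <= u2 -> h u1 v <= h u2 v) /\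
  (forall u v1 v2, I01 u -> I01 v1 -> I01 v2 -> v1 <= v2 -> h u v1 <= h u v2).

Definition decreasing2 {R : realType} (h : R -> R -> R) : Prop :=
  (forall u1 u2 v, I01 u1 -> I01 u2 -> I01 v -> u1 <= u2 -> h u2 v <= h u1 v) /\
  (forall u v1 v2, I01 u -> I01 v1 -> I01 v2 -> v1 <= v2 -> h u v2 <= h u v1).

Definition left_continuous2 {R : realType} (h : R -> R -> R) : Prop :=
  forall u, I01 u -> forall V : set R, V !=set0 -> V `<=` [set x | I01 x] ->
    h u (sup V) = sup [set h u v | v in V].

Definition right_continuous2 {R : realType} (h : R -> R -> R) : Prop :=
  forall u, I01 u -> forall V : set R, V !=set0 -> V `<=` [set x | I01 x] ->
    h u (inf V) = inf [set h u v | v in V].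

Definition semi_overlap {R : realType} (SO : R -> R -> R) : Prop :=
  into_unit SO /\
  commutative2 SO /\
  (forall u v, I01 u -> I01 v -> u * v = 0 -> SO u v = 0) /\
  (forall u v, I01 u -> I01 v -> u * v = 1 -> SO u v = 1) /\
  increasing2 SO /\
  left_continuous2 SO.

(* Main.v *)
Require Import Defs.
From HB Require Import structures.
From mathcomp Require Import all_boot all_order all_algebra.
From mathcomp Require Import all_classical all_reals.
From mathcomp Require Import lra.
Import Order.TTheory GRing.Theory Num.Theory.
Local Open Scope ring_scope.

Lemma frac_mono (R : realType) (a b c d : R) :
  0 <= a -> a <= c -> 0 <= d -> d <= b -> 0 < a + b -> 0 < c + d ->
  a / (a + b) <= c / (c + d).
Proof.
move=> ha hac hd hdb hab hcd.
rewrite ler_pdivrMr // mulrAC ler_pdivlMr //.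
nra.
Qed.

Lemma frac_le1 (R : realType) (a b : R) : 0 <= a -> 0 <= b -> 0 < a + b ->
  0 <= a / (a + b) <= 1.
Proof.
move=> ha hb hab; apply/andP; split; first by rewrite divr_ge0 // ltW.
rewrite ler_pdivrMr // mul1r; lra.
Qed.

Lemma div_anti (R : realType) (a h H : R) : 0 <= a -> 0 < h -> h <= H ->
  a / H <= a / h.
Proof.
move=> ha hh hH.
have HH : 0 < H by apply: lt_le_trans hH.
rewrite ler_pdivrMr // mulrAC ler_pdivlMr //; nra.
Qed.

Lemma divle_mul (R : realType) (a H T : R) : 0 < H -> a / H <= T -> a <= T * H.
Proof. by move=> Hp; rewrite ler_pdivrMr. Qed.

Lemma sup_I01 (R : realType) (V : set R) : (V !=set0)%classic ->
  (V `<=` [set x | I01 x])%classic -> I01 (sup V).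
Proof.
move=> [v0 Vv0] VI.
have hub : has_ubound V by exists 1 => x /VI /andP[] //.
apply/andP; split.
  have := ub_le_sup hub Vv0; have /andP[h0 _] := VI _ Vv0; lra.
apply: ge_sup; first by exists v0.
by move=> x /VI /andP[] //.
Qed.

Theorem theorem3p6 (R : realType) (SO : R -> R -> R) :
  semi_overlap SO <->
  exists f g : R -> R -> R,
    into_unit f /\ into_unit g /\
    (forall u v, I01 u -> I01 v -> SO u v = f u v / (f u v + g u v)) /\
    (forall u v, I01 u -> I01 v -> f u v + g u v != 0) /\
    (commutative2 f /\ commutative2 g) /\
    (forall u v, I01 u -> I01 v -> u * v = 0 -> f u v = 0) /\
    (forall u v, I01 u -> I01 v -> u * v = 1 -> g u v = 0) /\
    (increasing2 f /\ decreasing2 g) /\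
    (left_continuous2 f /\ right_continuous2 (fun u v => f u v + g u v)).
Proof.
split.
- move=> [hI [hC [h0 [h1 [[hM1 hM2] hL]]]]].
  exists SO, (fun u v => 1 - SO u v).
  have e1 : forall x : R, x + (1 - x) = 1 by move=> x; lra.
  split; first exact: hI.
  split.
    move=> u v hu hv; have /andP[a b] := hI u v hu hv; apply/andP; split; lra.
  split; first by move=> u v _ _; rewrite e1 divr1.
  split; first by move=> u v _ _; rewrite e1 oner_neq0.
  split; first by split=> // u v hu hv; rewrite hC.
  split; first exact: h0.
  split; first by move=> u v hu hv huv; rewrite h1 // subrr.
  split.
    split; first by [].
    split.
      by move=> u1 u2 v a b c hu; have := hM1 u1 u2 v a b c hu; lra.
    by move=> u v1 v2 a b c hv; have := hM2 u v1 v2 a b c hv; lra.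
  split; first exact: hL.
  move=> u hu V [v0 Vv0] VI /=.
  rewrite e1.
  have -> : [set SO u v + (1 - SO u v) | v in V]%classic = [set 1]%classic.
    apply/seteqP; split=> x /=.
      by move=> [v _ <-]; rewrite e1.
    by move=> ->; exists v0 => //; rewrite e1.
  by rewrite inf1.
- move=> [f [g [fI [gI [hSO [hnz [[fC gC] [f0 [g1 [[[fM1 fM2] [gM1 gM2]] [fL hR]]]]]]]]]]].
  pose h u v := f u v + g u v.
  have hpos : forall u v, I01 u -> I01 v -> 0 < h u v.
    move=> u v hu hv; have := hnz u v hu hv; rewrite /h.
    have /andP[a _] := fI u v hu hv; have /andP[b _] := gI u v hu hv.
    rewrite lt_neqAle eq_sym => -> /=; lra.
  have hmono : forall u a b, I01 u -> I01 a -> I01 b -> a <= b -> h u a <= h u b.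
    move=> u a b hu ha hb hab.
    pose W := [set x | a <= x <= b]%classic.
    have Wa : W a by rewrite /W /= lexx hab.
    have WI : (W `<=` [set x | I01 x])%classic.
      move=> x /andP[xa xb]; have /andP[? ?] := ha; have /andP[? ?] := hb.
      rewrite /I01; apply/andP; split; lra.
    have infW : inf W = a.
      apply/eqP; rewrite eq_le; apply/andP; split.
        by apply: ge_inf => //; exists a => x /andP[].
      by apply: lb_le_inf; [exists a | move=> x /andP[]].
    have := hR u hu W (ex_intro _ a Wa) WI; rewrite /h infW /= => ->.
    apply: ge_inf; last by exists b => //; rewrite /W /= lexx hab.
    exists 0 => y [x /WI Ix <-].
    have /andP[? _] := fI u x hu Ix; have /andP[? _] := gI u x hu Ix; lra.
  have fg0 : forall u v, I01 u -> I01 v -> 0 <= f u v /\ 0 <= g u v.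
    move=> u v hu hv.
    by have /andP[? _] := fI u v hu hv; have /andP[? _] := gI u v hu hv.
  have SOmono2 : forall u v1 v2, I01 u -> I01 v1 -> I01 v2 -> v1 <= v2 ->
      SO u v1 <= SO u v2.
    move=> u v1 v2 hu h1 h2 hv; rewrite !hSO //.
    have [? ?] := fg0 u v1 hu h1; have [? ?] := fg0 u v2 hu h2.
    apply: frac_mono => //; [exact: fM2 | exact: gM2 | exact: hpos | exact: hpos].
  have SOI : forall u v, I01 u -> I01 v -> I01 (SO u v).
    move=> u v hu hv; rewrite hSO //; have [? ?] := fg0 u v hu hv.
    exact: frac_le1 (hpos u v hu hv).
  split; first exact: SOI.
  split; first by move=> u v hu hv; rewrite !hSO // fC // gC.
  split; first by move=> u v hu hv huv; rewrite hSO // f0 // mul0r.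
  split.
    move=> u v hu hv huv; rewrite hSO // g1 // addr0 divff //.
    by have := hnz u v hu hv; rewrite g1 // addr0.
  split.
    split; last exact: SOmono2.
    move=> u1 u2 v hu1 hu2 hv hu; rewrite !hSO //.
    have [? ?] := fg0 u1 v hu1 hv; have [? ?] := fg0 u2 v hu2 hv.
    apply: frac_mono => //; [exact: fM1 | exact: gM1 | exact: hpos | exact: hpos].
  move=> u hu V V0 VI.
  have sI := @sup_I01 _ V V0 VI.
  set E := [set SO u v | v in V]%classic.
  have E0 : (E !=set0)%classic by case: V0 => v Vv; exists (SO u v), v.
  have Eub : ubound E 1 by move=> y [v /VI Iv <-]; have /andP[] := SOI u v hu Iv.
  have EsupT : ubound E (sup E) by apply: sup_upper_bound; split => //; exists 1.
  apply/eqP; rewrite eq_le; apply/andP; split; last first.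
    apply: ge_sup => // y [v Vv <-]; apply: SOmono2 => //; first exact: VI.
    apply: (ub_le_sup _ Vv); exists 1 => x /VI /andP[] //.
  rewrite hSO //.
  have Hp := hpos u (sup V) hu sI.
  rewrite ler_pdivrMr // {1}fL //.
  apply: ge_sup; first by case: V0 => v Vv; exists (f u v), v.
  move=> y [v Vv <-].
  have Iv := VI v Vv.
  have : f u v / h u (sup V) <= sup E.
    apply: le_trans (EsupT (SO u v) (ex_intro2 _ _ v Vv erefl)).
    rewrite hSO //; apply: div_anti; first by case: (fg0 u v hu Iv).
      exact: hpos.
    apply: hmono => //; apply: (ub_le_sup _ Vv); exists 1 => x /VI /andP[] //.
  move=> H; have K := @divle_mul _ _ _ _ Hp H; rewrite /h /= in K; exact K.
Qed.
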